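(* Let $p$ be a prime and $n$ a positive integer with $p^n\equiv 2 \pmod 3$, let $d=\frac{2p^n-1}{3}$ and $F(x)=x^d$ on $\mathrm{GF}(p^n)$. For every $c\in\mathrm{GF}(p^n)$ with $c\neq1$, ${}_c\Delta_F\le 3$.
   Context: For a function $F:\mathrm{GF}(p^n)\to\mathrm{GF}(p^n)$ and $a,b,c\in\mathrm{GF}(p^n)$, let ${}_c\Delta_F(a,b)=\#\{x\in\mathrm{GF}(p^n): F(x+a)-cF(x)=b\}$. The $c$-differential uniformity of $F$ is ${}_c\Delta_F=\max\{{}_c\Delta_F(a,b): a,b\in\mathrm{GF}(p^n),\ \text{and } a\neq 0 \text{ if } c=1\}$. *)

(* Defs.v *)
From HB Require Import structures.
From mathcomp Require Import all_boot all_order all_algebra all_field.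
Set Implicit Arguments. Unset Strict Implicit. Unset Printing Implicit Defensive.
Import GRing.Theory.
Local Open Scope ring_scope.

Definition cDelta (K : finFieldType) (f : K -> K) (c a b : K) : nat :=
  #|[set x : K | f (x + a) - c * f x == b]|.

Definition cDU (K : finFieldType) (f : K -> K) (c : K) : nat :=
  (\max_(ab : K * K | (c != 1%R) || (ab.1 != 0%R)) cDelta f c ab.1 ab.2)%N.

(* Main.v *)
Require Import Defs.
From HB Require Import structures.
From mathcomp Require Import all_boot all_order all_algebra all_field.
From mathcomp Require Import ring zify.
Local Open Scope ring_scope.
Import GRing.Theory.

Lemma cube_inv {K : finFieldType} {d : nat} :
  (3 * d = 2 * #|K| - 1)%N -> forall x : K, (x ^+ d) ^+ 3 = x.
Proof.
move=> hd x; rewrite -exprM mulnC hd.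
have hK : (0 < #|K|)%N by apply/card_gt0P; exists 0.
have -> : (2 * #|K| - 1 = #|K| + (#|K| - 1))%N by lia.
rewrite exprD expf_card -exprS.
have -> : (#|K| - 1).+1 = #|K| by lia.
by rewrite expf_card.
Qed.

Theorem theorem5 (p n : nat) (K : finFieldType) :
  prime p -> (0 < n)%N -> #|K| = (p ^ n)%N -> (p ^ n %% 3 = 2)%N ->
  forall c : K, c != 1 ->
  (cDU (fun x : K => x ^+ ((2 * p ^ n - 1) %/ 3)) c <= 3)%N.
Proof.
move=> _ _ hK hmod c hc.
set d := ((2 * p ^ n - 1) %/ 3)%N.
have hd : (3 * d = 2 * #|K| - 1)%N.
  rewrite hK /d; set q := (p ^ n)%N in hmod *.
  have hq := divn_eq q 3; rewrite hmod in hq.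
  rewrite hq; set k := (q %/ 3)%N.
  have -> : (2 * (k * 3 + 2) - 1 = (2 * k + 1) * 3)%N by lia.
  rewrite mulnK //; lia.
have Fc := cube_inv hd.
have cF : forall x : K, (x ^+ 3) ^+ d = x by move=> x; rewrite exprAC Fc.
have Finj : injective (fun x : K => x ^+ d).
  by move=> x y /= e; rewrite -(Fc x) -(Fc y) e.
have hc3 : c ^+ 3 - 1 != 0.
  rewrite subr_eq0; apply/eqP => e; move/eqP: hc; apply.
  by rewrite -(cF c) e expr1n.
rewrite /cDU; apply/bigmax_leqP => [[a b]] _ /=.
rewrite /cDelta.
set S := [set x : K | _].
pose E (i : nat) : K := nth 0 [:: b ^+ 3 - a; 3%:R * b ^+ 2 * c; 3%:R * b * c ^+ 2; c ^+ 3 - 1] i.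
pose P := \poly_(i < 4) E i.
have HP : forall y, P.[y] = (b + c * y) ^+ 3 - (y ^+ 3 + a).
  move=> y; rewrite /P horner_poly !big_ord_recl big_ord0 /E /=.
  rewrite /bump /=. ring.
have P0 : P != 0.
  apply/eqP => e; move: hc3.
  have := coef_poly 4 E 3; rewrite -/P e coef0 /= /E /= => <-.
  by rewrite eqxx.
pose T := [set y : K | root P y].
have sub : [set x ^+ d | x in S] \subset T.
  apply/subsetP => y /imsetP [x]; rewrite inE => /eqP hx ->.
  rewrite inE /root HP Fc.
  have -> : b + c * x ^+ d = (x + a) ^+ d by rewrite -hx; ring.
  by rewrite Fc subrr.
apply: (leq_trans _ (leq_trans (subset_leq_card sub) _)).
  by rewrite (card_imset _ Finj).
have := max_poly_roots P0 (rs := enum T).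
rewrite enum_uniq cardE.
have -> : all (root P) (enum T).
  by apply/allP => y; rewrite mem_enum inE.
move=> /(_ isT isT) h; apply: leq_trans (_ : (size P).-1 <= 3)%N.
  by rewrite -ltnS; apply: leq_trans h _; rewrite leqSpred.
by have := size_poly 4 E; rewrite -/P; case: (size P).
Qed.
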